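(* Let $k$ be a field of characteristic $p>0$, let $d_1,\ldots,d_{n-1}$ be positive integers and suppose $d_n=\sum_{i=1}^{n-1}(d_i-1)$. Let \[ A = k[x_1,\ldots,x_n]/(x_1^{d_1}, \ldots, x_n^{d_n}) \quad\text{and}\quad B = k[x_1,\ldots,x_n]/(x_1^{d_1}, \ldots, x_{n-1}^{d_{n-1}}, x_n^{d_n-1}). \] If the multinomial coefficient $\binom{d_n}{d_1-1, \ldots, d_{n-1}-1}=\frac{d_n!}{(d_1-1)!\cdots(d_{n-1}-1)!}$ is not divisible by $p$, then both $A$ and $B$ have the weak Lefschetz property. If $\binom{d_n}{d_1-1, \ldots, d_{n-1}-1}$ is divisible by $p$, then $A$ fails to have the weak Lefschetz property.
   Context: Algebras are graded by degree, $A=\bigoplus_{i\ge0}A_i$. A graded artinian algebra $A$ has the weak Lefschetz property if there is a linear form $\ell\in A_1$ such that for every $i$ the map $A_i\to A_{i+1}$, $a\mapsto \ell a$, is injective or surjective. *)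

(* Defs.v *)
From HB Require Import structures.
From mathcomp Require Import all_boot all_order all_algebra.
From mathcomp Require Import mpoly.
Set Implicit Arguments. Unset Strict Implicit. Unset Printing Implicit Defensive.
Import Order.TTheory GRing.Theory.
Local Open Scope ring_scope.

(* We work with the polynomial ring {mpoly k[n]} and the ideal I_e; graded
   pieces of the quotient are k[x]_i / (I_e)_i (I_e is a monomial, hence
   homogeneous, ideal). *)
Section MCI.
Variables (k : fieldType) (n : nat).

Definition in_mci_ideal (e : 'I_n -> nat) (f : {mpoly k[n]}) : Prop :=
  exists g : 'I_n -> {mpoly k[n]}, f = \sum_(j < n) g j * 'X_j ^+ e j.

Definition mult_injective (e : 'I_n -> nat) (l : {mpoly k[n]}) (i : nat) : Prop :=
  forall f : {mpoly k[n]}, f \is i.-homog ->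
    in_mci_ideal e (l * f) -> in_mci_ideal e f.

Definition mult_surjective (e : 'I_n -> nat) (l : {mpoly k[n]}) (i : nat) : Prop :=
  forall g : {mpoly k[n]}, g \is i.+1.-homog ->
    exists f : {mpoly k[n]}, f \is i.-homog /\ in_mci_ideal e (g - l * f).

Definition mci_WLP (e : 'I_n -> nat) : Prop :=
  exists l : {mpoly k[n]}, l \is 1.-homog /\
    forall i : nat, mult_injective e l i \/ mult_surjective e l i.

End MCI.

(* Main.v *)
Require Import Defs.
From HB Require Import structures.
From mathcomp Require Import all_boot all_order all_algebra.
From mathcomp Require Import mpoly ring zify.
Set Implicit Arguments. Unset Strict Implicit. Unset Printing Implicit Defensive.
Import GRing.Theory.
Local Open Scope ring_scope.

Section Gen.
Variables (k : fieldType) (n : nat).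
Implicit Types (f g h p q u : {mpoly k[n]}) (mu nu : 'X_{1..n}).

Lemma mcoeffXM_gen p nu mu :
  (p * 'X_[nu])@_mu = if (nu <= mu)%MM then p@_(mu - nu)%MM else 0.
Proof.
case: ifP => hle.
  by rewrite -{1}(submK hle) addmC mcoeffMX.
apply/eqP; rewrite mcoeff_eq0; apply/negP.
rewrite (perm_mem (msuppMX p nu)) => /mapP [m' _ Hm].
move: hle; rewrite Hm; move/negbT/negP; apply; apply/mnm_lepP => i.
by rewrite mnmDE leq_addr.
Qed.

Lemma mcoeffMX_gen p nu mu :
  ('X_[nu] * p)@_mu = if (nu <= mu)%MM then p@_(mu - nu)%MM else 0.
Proof. by rewrite -commr_mpolyX mcoeffXM_gen. Qed.

Lemma mcoeffXiM (j : 'I_n) p mu :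
  ('X_j * p)@_mu = if (0 < mu j)%N then p@_(mu - U_(j))%MM else 0.
Proof.
rewrite mcoeffMX_gen; congr (if _ then _ else _).
apply/mnm_lepP/idP => [/(_ j)|h i]; first by rewrite mnm1E eqxx.
by rewrite mnm1E; case: eqP => // <-.
Qed.

Lemma lepm_mdeg mu nu : (mu <= nu)%MM -> (mdeg mu <= mdeg nu)%N.
Proof. by move=> h; rewrite -(submK h) mdegD leq_addl. Qed.

Lemma lepm_mdeg_eq mu nu : (mu <= nu)%MM -> mdeg mu = mdeg nu -> mu = nu.
Proof.
move=> h; rewrite -[in mdeg nu](submK h) mdegD => /eqP; rewrite -{2}(submK h).
rewrite -{1}[mdeg mu]add0n eqn_add2r eq_sym mdeg_eq0 => /eqP ->.
by rewrite addmC addm0.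
Qed.


Section Ideal.
Variable e : 'I_n -> nat.
Local Notation I := (@in_mci_ideal k n e).

Definition std mu := [forall j, (mu j < e j)%N].

Lemma I0 : I 0.
Proof. by exists (fun _ => 0); rewrite big1 // => j _; rewrite mul0r. Qed.

Lemma ID f g : I f -> I g -> I (f + g).
Proof.
move=> [a ->] [b ->]; exists (fun j => a j + b j).
by rewrite -big_split /=; apply: eq_bigr => j _; rewrite mulrDl.
Qed.

Lemma IM h f : I f -> I (h * f).
Proof.
move=> [a ->]; exists (fun j => h * a j).
by rewrite mulr_sumr; apply: eq_bigr => j _; rewrite mulrA.
Qed.

Lemma IMr h f : I f -> I (f * h).
Proof. by move=> hf; rewrite mulrC; apply: IM. Qed.

Lemma IN f : I f -> I (- f).
Proof. by move=> hf; rewrite -mulN1r; apply: IM. Qed.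

Lemma IB f g : I f -> I g -> I (f - g).
Proof. by move=> hf hg; apply: ID => //; apply: IN. Qed.

Lemma IZ c f : I f -> I (c *: f).
Proof. by move=> hf; rewrite -mul_mpolyC; apply: IM. Qed.

Lemma Isum (T : Type) (r : seq T) (P : pred T) (F : T -> {mpoly k[n]}) :
  (forall i, P i -> I (F i)) -> I (\sum_(i <- r | P i) F i).
Proof.
move=> h; elim/big_rec: _ => [|i x Pi Ix]; first exact: I0.
by apply: ID => //; apply: h.
Qed.

Lemma IX (j : 'I_n) : I ('X_j ^+ e j).
Proof.
exists (fun i => if i == j then 1 else 0).
rewrite (bigD1 j) //= eqxx mul1r big1 ?addr0 // => i /negbTE ->.
by rewrite mul0r.
Qed.

Lemma Imono mu (j : 'I_n) : (e j <= mu j)%N -> I 'X_[mu].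
Proof.
move=> h.
have hle : (U_(j) *+ e j <= mu)%MM.
  apply/mnm_lepP => i; rewrite mulmnE mnm1E.
  by case: eqP => [<-|_]; rewrite ?mul1n ?mul0n.
rewrite -(submK hle) mpolyXD -mpolyXn; apply: IM; exact: IX.
Qed.

Lemma I_coef f : I f -> forall mu, std mu -> f@_mu = 0.
Proof.
move=> [a ->] mu /forallP hs; rewrite raddf_sum big1 // => j _.
rewrite /= mpolyXn mcoeffXM_gen; case: ifP => // /mnm_lepP /(_ j).
by rewrite mulmnE mnm1E eqxx mul1n leqNgt hs.
Qed.

Lemma coef_I f : (forall mu, std mu -> f@_mu = 0) -> I f.
Proof.
move=> h; rewrite (mpolyE f); apply: Isum => mu _.
case: (boolP (std mu)) => [/h -> |]; first by rewrite scale0r; exact: I0.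
rewrite negb_forall => /existsP [j]; rewrite -leqNgt => hj.
by apply: IZ; apply: (Imono hj).
Qed.

End Ideal.

Section XFree.
Variables (w : 'I_n) (a : 'I_n -> k).

Definition xfree p := forall mu, (0 < mu w)%N -> p@_mu = 0.

Lemma xfreeD p q : xfree p -> xfree q -> xfree (p + q).
Proof. by move=> hp hq mu h; rewrite mcoeffD hp ?hq ?addr0. Qed.

Lemma xfreeN p : xfree p -> xfree (- p).
Proof. by move=> hp mu h; rewrite mcoeffN hp ?oppr0. Qed.

Lemma xfreeZ c p : xfree p -> xfree (c *: p).
Proof. by move=> hp mu h; rewrite mcoeffZ hp ?mulr0. Qed.

Lemma xfree0 : xfree 0.
Proof. by move=> mu _; rewrite mcoeff0. Qed.

Lemma xfree1 : xfree 1.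
Proof.
move=> mu h; rewrite mcoeff1; case: eqP => // E.
by move: h; rewrite E mnm0E.
Qed.

Lemma xfreeM p q : xfree p -> xfree q -> xfree (p * q).
Proof.
move=> hp hq mu hmu; rewrite mcoeffM big1 // => [[k1 k2]] /= /eqP E.
have : (0 < k1 w)%N || (0 < k2 w)%N.
  by move: hmu; rewrite -addn_gt0 -mnmDE -E.
by case/orP => h; [rewrite hp ?mul0r | rewrite hq ?mulr0].
Qed.

Lemma xfreeXn p i : xfree p -> xfree (p ^+ i).
Proof.
move=> hp; elim: i => [|i IH]; first by rewrite expr0; exact: xfree1.
by rewrite exprS; apply: xfreeM.
Qed.

Lemma xfree_sum (T : Type) (r : seq T) (P : pred T) (F : T -> {mpoly k[n]}) :
  (forall i, P i -> xfree (F i)) -> xfree (\sum_(i <- r | P i) F i).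
Proof.
move=> h; elim/big_rec: _ => [|i x Pi Ix]; first exact: xfree0.
by apply: xfreeD => //; apply: h.
Qed.

Lemma xfree_mono mu : mu w = 0%N -> xfree 'X_[mu].
Proof.
move=> h nu hnu; rewrite mcoeffX; case: eqP => // E.
by move: hnu; rewrite -E h.
Qed.

Definition LL := \sum_(j | j != w) a j *: 'X_j.

Lemma xfreeL : xfree LL.
Proof.
apply: xfree_sum => j hj; apply: xfreeZ; apply: xfree_mono.
by rewrite mnm1E (negbTE hj).
Qed.

Lemma homogL : LL \is 1.-homog.
Proof.
apply: rpred_sum => j _; apply: rpredZ.
by rewrite dhomogX; apply/eqP; apply: mdeg1.
Qed.

Lemma coefLM p mu :
  (LL * p)@_mu = \sum_(j | j != w) a j * (if (0 < mu j)%N then p@_(mu - U_(j))%MM else 0).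
Proof.
rewrite mulr_suml raddf_sum; apply: eq_bigr => j _.
by rewrite /= -scalerAl mcoeffZ mcoeffXiM.
Qed.

Lemma coefLM0 p mu : (forall j, j != w -> mu j = 0%N) -> (LL * p)@_mu = 0.
Proof.
move=> h; rewrite coefLM big1 // => j hj.
by rewrite h // ltnn mulr0.
Qed.

End XFree.

Section Main.
Variables (e : 'I_n -> nat) (w : 'I_n).
Hypothesis he : forall j, (0 < e j)%N.
Local Notation I := (@in_mci_ideal k n e).

Definition ss : 'X_{1..n} := [multinom (if j == w then 0 else (e j).-1)%N | j < n].
Definition tau : 'X_{1..n} := [multinom (e j).-1 | j < n].

Lemma ssE j : ss j = (if j == w then 0 else (e j).-1)%N.
Proof. by rewrite mnmE. Qed.

Lemma tauE j : tau j = (e j).-1.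
Proof. by rewrite mnmE. Qed.

Lemma std_tau : std e tau.
Proof. by apply/forallP => j; rewrite tauE prednK. Qed.

Lemma coef_tau_I f : I f -> f@_tau = 0.
Proof. by move=> h; apply: (I_coef h); exact: std_tau. Qed.

Lemma tau_split : tau = (ss + U_(w) *+ (e w).-1)%MM.
Proof.
apply/mnmP => j; rewrite mnmDE mulmnE mnm1E tauE ssE.
by case: (eqVneq j w) => [->|hjw]; rewrite ?mul1n ?mul0n ?addn0 ?add0n.
Qed.

Lemma std_le_ss mu : std e mu -> mu w = 0%N -> (mu <= ss)%MM.
Proof.
move=> /forallP hs hw; apply/mnm_lepP => j; rewrite ssE.
case: eqP => [->|_]; first by rewrite hw.
by rewrite -ltnS prednK.
Qed.

Lemma xfree_big u D : xfree w u -> u \is D.-homog -> (mdeg ss < D)%N -> I u.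
Proof.
move=> hx hh hD; apply: coef_I => mu hs.
case: (posnP (mu w)) => hw; last exact: hx.
apply: (dhomog_nemf_coeff hh); apply: contraTneq hD => <-.
by rewrite -leqNgt; apply: lepm_mdeg; apply: std_le_ss.
Qed.

Lemma xfree_top u : xfree w u -> u \is (mdeg ss).-homog ->
  I (u - u@_ss *: 'X_[ss]).
Proof.
move=> hx hh; apply: coef_I => mu hs.
rewrite mcoeffB mcoeffZ mcoeffX.
case: (posnP (mu w)) => hw; last first.
  rewrite hx //; case: eqP => [E|_]; last by rewrite mulr0 subr0.
  by move: hw; rewrite -E ssE eqxx.
have hle := std_le_ss hs hw.
case: (eqVneq ss mu) => [->|hne]; first by rewrite mulr1 subrr.
rewrite mulr0 subr0; apply: (dhomog_nemf_coeff hh).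
apply: contra hne => /eqP E; apply/eqP; apply: esym; exact: lepm_mdeg_eq.
Qed.

End Main.
End Gen.

Section Pos.
Variables (k : fieldType) (n : nat).
Implicit Types (f g h p q u : {mpoly k[n]}) (mu nu : 'X_{1..n}).
Variables (e : 'I_n -> nat) (w : 'I_n) (a : 'I_n -> k).
Hypothesis he : forall j, (0 < e j)%N.
Local Notation I := (@in_mci_ideal k n e).
Local Notation L := (LL w a).
Local Notation l := (LL w a + 'X_w).

Definition SS b : {mpoly k[n]} := \sum_(i < b) 'X_w ^+ (b.-1 - i) * (- L) ^+ i.

Lemma lSS b : l * SS b = 'X_w ^+ b - (- L) ^+ b.
Proof. by rewrite subrXX opprK addrC. Qed.

Lemma KK f b : I (l * f) -> I (f * 'X_w ^+ b - f * (- L) ^+ b).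
Proof.
by move=> h; rewrite -mulrBr -lSS mulrA [f * l]mulrC; apply: IMr.
Qed.

Lemma homogX1 : ('X_w : {mpoly k[n]}) \is 1.-homog.
Proof. by rewrite dhomogX; apply/eqP; apply: mdeg1. Qed.

Lemma homogSS b : SS b \is b.-1.-homog.
Proof.
apply: rpred_sum => i _.
have hd : (1 * (b.-1 - i) + 1 * i)%N = b.-1.
  by rewrite !mul1n subnK // -ltnS prednK // (leq_ltn_trans _ (ltn_ord i)).
have H1 : ('X_w : {mpoly k[n]}) ^+ (b.-1 - i) \is (1 * (b.-1 - i)).-homog.
  by apply: dhomogMn; exact: homogX1.
have H2 : (- L) ^+ i \is (1 * i).-homog.
  by apply: dhomogMn; rewrite rpredN; exact: homogL.
by have := dhomogM H1 H2; rewrite hd.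
Qed.

Lemma coef_mul_expand f u sigma :
  (f * u)@_sigma = \sum_(r <- msupp u) u@_r * (if (r <= sigma)%MM then f@_(sigma - r)%MM else 0).
Proof.
rewrite {1}(mpolyE u) mulr_sumr raddf_sum; apply: eq_bigr => r _.
by rewrite /= -scalerAr mcoeffZ mcoeffXM_gen.
Qed.

Lemma slice f u rho b : xfree w u -> u \is (mdeg rho).-homog -> rho w = 0%N ->
  (f * u)@_(rho + U_(w) *+ b)%MM = u@_rho * f@_(U_(w) *+ b)%MM.
Proof.
move=> hx hh hrw; rewrite coef_mul_expand.
have key : forall r, r \in msupp u -> (r <= rho + U_(w) *+ b)%MM -> r = rho.
  move=> r hr hle; have rw : r w = 0%N.
    by apply/eqP; rewrite -leqn0 leqNgt; apply/negP => /hx; apply/eqP; rewrite -mcoeff_msupp.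
  apply: lepm_mdeg_eq; last by rewrite (dhomog_mf hh hr).
  apply/mnm_lepP => j; move/mnm_lepP: hle => /(_ j); rewrite mnmDE mulmnE mnm1E.
  by case: (eqVneq w j) => [<-|_]; rewrite ?rw ?mul0n ?addn0.
have msub : ((rho + U_(w) *+ b) - rho)%MM = (U_(w) *+ b)%MM by rewrite addmC addmK.
case: (boolP (rho \in msupp u)) => hin.
  rewrite (bigD1_seq rho) //= ?msupp_uniq // big1_seq.
    rewrite addr0 msub; case: ifP => // /negbT /negP; case.
    by apply/mnm_lepP => j; rewrite mnmDE leq_addr.
  by move=> r /andP [hne hr]; case: ifP => [/(key r hr) E|]; [move: hne; rewrite E eqxx | rewrite mulr0].
rewrite big1_seq; last first.
  by move=> r /andP [_ hr]; case: ifP => [/(key r hr) E|]; [move: hin; rewrite -E hr | rewrite mulr0].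
by move: hin; rewrite mcoeff_msupp negbK => /eqP ->; rewrite mul0r.
Qed.


Lemma ctI f : I f -> f@_(tau e) = 0.
Proof. exact: (coef_tau_I he). Qed.

Lemma std_le_tau mu : (mu <= tau e)%MM -> std e mu.
Proof.
move/mnm_lepP => h; apply/forallP => j; move: (h j); rewrite tauE => hj.
by rewrite (leq_ltn_trans hj) // prednK.
Qed.

Lemma le_tau_std mu : std e mu -> (mu <= tau e)%MM.
Proof.
move/forallP => h; apply/mnm_lepP => j; rewrite tauE.
by rewrite -ltnS prednK.
Qed.

Lemma mdeg_tau : mdeg (tau e) = (mdeg (ss e w) + (e w).-1)%N.
Proof. by rewrite (tau_split e w) mdegD mdegMn mdeg1 mul1n. Qed.

Lemma tau_sub_ss : (tau e - ss e w)%MM = (U_(w) *+ (e w).-1)%MM.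
Proof. by rewrite (tau_split e w) addmC addmK. Qed.

Lemma ss_le_tau : (ss e w <= tau e)%MM.
Proof. by rewrite (tau_split e w); apply/mnm_lepP => j; rewrite mnmDE leq_addr. Qed.

Lemma IfLE f : I (l * f) -> I (f * L ^+ e w).
Proof.
move=> hlf; have h2 := KK (e w) hlf.
have h3 : I (f * 'X_w ^+ e w) by apply: IM; apply: IX.
have h4 := IB h3 h2.
have := IM ((-1) ^+ e w) h4.
have hs : ((-1) ^+ e w : {mpoly k[n]}) ^+ 2 = 1 by apply: sqrr_sign.
rewrite [(- L) ^+ _]exprNn; set s := (-1) ^+ e w.
suff -> : s * (f * 'X_w ^+ e w - (f * 'X_w ^+ e w - f * (s * L ^+ e w))) = f * L ^+ e w * s ^+ 2.
  by rewrite hs mulr1.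
ring.
Qed.

Lemma inj_pos i :
  (exists rho, [/\ (rho <= ss e w)%MM, mdeg rho = e w & (L ^+ e w)@_rho != 0]) ->
  (i < e w)%N -> mult_injective e l i.
Proof.
move=> [rho [hrs hrd hrnz]] hi f hf hlf.
have hfx : f@_(U_(w) *+ (e w).-1)%MM = 0.
  have h1 := IfLE hlf.
  have rw : rho w = 0%N.
    by move/mnm_lepP: hrs => /(_ w); rewrite ssE eqxx leqn0 => /eqP.
  have hstd : std e (rho + U_(w) *+ (e w).-1)%MM.
    apply: std_le_tau; rewrite (tau_split e w); apply/mnm_lepP => j.
    by rewrite !mnmDE leq_add2r; move/mnm_lepP: hrs; apply.
  have := I_coef h1 hstd.
  rewrite slice //; last 2 first.
  - by apply: xfreeXn; apply: xfreeL.
  - by rewrite hrd -[X in X.-homog]mul1n; apply: dhomogMn; apply: homogL.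
  by move/eqP; rewrite mulf_eq0 (negbTE hrnz) => /eqP.
apply: coef_I => mu hs.
case: (eqVneq (mdeg mu) i) => hmu; last by apply: (dhomog_nemf_coeff hf).
have hmt := le_tau_std hs.
set nu := (tau e - mu)%MM.
have hnt : (nu <= tau e)%MM by apply/mnm_lepP => j; rewrite mnmBE leq_subr.
have htn : (tau e - nu)%MM = mu.
  apply/mnmP => j; rewrite !mnmBE; move/mnm_lepP: hmt => /(_ j) h.
  by rewrite subKn.
have -> : f@_mu = (f * 'X_[nu])@_(tau e) by rewrite mcoeffXM_gen hnt htn.
set b := nu w.
set nu' := (nu - U_(w) *+ b)%MM.
have hle : (U_(w) *+ b <= nu)%MM.
  apply/mnm_lepP => j; rewrite mulmnE mnm1E.
  by case: (eqVneq w j) => [<-|_]; rewrite ?mul1n ?mul0n.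
have hnu : nu = (nu' + U_(w) *+ b)%MM by rewrite submK.
have hnw : nu' w = 0%N by rewrite mnmBE mulmnE mnm1E eqxx mul1n subnn.
set u := 'X_[nu'] * (- L) ^+ b.
have -> : (f * 'X_[nu])@_(tau e) = (f * u)@_(tau e).
  apply/eqP; rewrite -subr_eq0 -mcoeffB; apply/eqP; apply: ctI => //.
  rewrite hnu mpolyXD -mpolyXn /u.
  have -> : f * ('X_[nu'] * 'X_w ^+ b) - f * ('X_[nu'] * (- L) ^+ b) =
    'X_[nu'] * (f * 'X_w ^+ b - f * (- L) ^+ b) by ring.
  by apply: IM; apply: KK.
have hux : xfree w u.
  by apply: xfreeM; [apply: xfree_mono | apply: xfreeXn; apply: xfreeN; apply: xfreeL].
have hdnu : mdeg nu = (mdeg nu' + b)%N by rewrite hnu mdegD mdegMn mdeg1 mul1n.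
have huh : u \is (mdeg nu).-homog.
  rewrite hdnu -[X in (_ + X)%N]mul1n; apply: dhomogM; first by rewrite dhomogX.
  by apply: dhomogMn; rewrite rpredN; apply: homogL.
have hdt : mdeg (tau e) = (mdeg nu + mdeg mu)%N.
  by rewrite -mdegD /nu submK.
have hE := he w.
have hge : (mdeg (ss e w) <= mdeg nu)%N.
  move: hdt; rewrite mdeg_tau hmu; lia.
case: (ltngtP (mdeg (ss e w)) (mdeg nu)) hge => // [hlt _|heq _].
  by apply: ctI; apply: IM; apply: (xfree_big he hux huh).
rewrite -heq in huh.
have hu := xfree_top he hux huh.
have -> : f * u = f * (u - u@_(ss e w) *: 'X_[ss e w]) + u@_(ss e w) *: (f * 'X_[ss e w]).
  by rewrite scalerAr -mulrDr subrK.
rewrite mcoeffD mcoeffZ ctI; last by apply: IM.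
rewrite mcoeffXM_gen ss_le_tau tau_sub_ss.
have -> : (e w).-1 = i.
  move: hdt; rewrite mdeg_tau hmu -heq; lia.
move: hfx; have -> : (e w).-1 = i by move: hdt; rewrite mdeg_tau hmu -heq; lia.
by move=> ->; rewrite mulr0 add0r.
Qed.


Lemma split_w mu : mu = ((mu - U_(w) *+ mu w) + U_(w) *+ mu w)%MM.
Proof.
rewrite submK //; apply/mnm_lepP => j; rewrite mulmnE mnm1E.
by case: (eqVneq w j) => [<-|_]; rewrite ?mul1n ?mul0n.
Qed.

Lemma split_w0 mu : (mu - U_(w) *+ mu w)%MM w = 0%N.
Proof. by rewrite mnmBE mulmnE mnm1E eqxx mul1n subnn. Qed.

Lemma split_deg mu : mdeg mu = (mdeg (mu - U_(w) *+ mu w)%MM + mu w)%N.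
Proof. by rewrite {1}[mu]split_w mdegD mdegMn mdeg1 mul1n. Qed.

Lemma reduce g D : g \is D.+1.-homog -> exists q u,
  [/\ q \is D.-homog, xfree w u, u \is D.+1.-homog & g = l * q + u].
Proof.
move=> hg.
exists (\sum_(mu <- msupp g) g@_mu *: ('X_[mu - U_(w) *+ mu w] * SS (mu w))).
exists (\sum_(mu <- msupp g) g@_mu *: ('X_[mu - U_(w) *+ mu w] * (- L) ^+ (mu w))).
split.
- rewrite big_seq; apply: rpred_sum => mu hmu; apply: rpredZ.
  have hd : mdeg mu = D.+1 := dhomog_mf hg hmu; rewrite split_deg in hd.
  case hb: (mu w) => [|b]; first by rewrite /SS big_ord0 mulr0 rpred0.
  rewrite hb in hd; have -> : D = (mdeg (mu - U_(w) *+ b.+1)%MM + b.+1.-1)%N by lia.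
  by apply: dhomogM; [rewrite dhomogX | apply: homogSS].
- apply: xfree_sum => mu _; apply: xfreeZ; apply: xfreeM.
    by apply: xfree_mono; apply: split_w0.
  by apply: xfreeXn; apply: xfreeN; apply: xfreeL.
- rewrite big_seq; apply: rpred_sum => mu hmu; apply: rpredZ.
  have hd : mdeg mu = D.+1 := dhomog_mf hg hmu; rewrite split_deg in hd.
  rewrite -hd -[X in (_ + X)%N]mul1n.
  apply: dhomogM; first by rewrite dhomogX.
  by apply: dhomogMn; rewrite rpredN; apply: homogL.
- rewrite {1}(mpolyE g) mulr_sumr -big_split /=; apply: eq_bigr => mu _.
  rewrite -scalerAr -scalerDr; congr (_ *: _).
  rewrite {1}[mu]split_w mpolyXD -mpolyXn.
  have hX : 'X_w ^+ mu w = l * SS (mu w) + (- L) ^+ (mu w) by rewrite lSS subrK.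
  rewrite hX; ring.
Qed.

Lemma homogSgn E : ((-1) ^+ E : {mpoly k[n]}) \is 0.-homog.
Proof.
have h1 : (-1 : {mpoly k[n]}) \is 0.-homog by rewrite rpredN; exact: dhomog1.
by have := dhomogMn E h1; rewrite mul0n.
Qed.

Lemma surj_pos i : (e w <= i)%N -> (mdeg (ss e w) <= i.+1)%N ->
  (e w <= mdeg (ss e w))%N -> (L ^+ mdeg (ss e w))@_(ss e w) != 0 ->
  mult_surjective e l i.
Proof.
move=> hEi hmi hEm hM g hg.
have [q [u [hq hux huh ->]]] := reduce hg.
case: (ltngtP (mdeg (ss e w)) i.+1) hmi => // [hlt _|heq _].
  exists q; split => //; rewrite addrAC subrr add0r.
  exact: (xfree_big he hux huh hlt).
set m := mdeg (ss e w) in heq hEm hM *.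
set E := e w in hEi hEm *.
set M := (L ^+ m)@_(ss e w) in hM.
set c := u@_(ss e w).
set s : {mpoly k[n]} := (-1) ^+ E.
set r := - (s * L ^+ (m - E) * SS E).
have hE : (0 < E)%N by apply: he.
have hr : r \is i.-homog.
  rewrite rpredN.
  have hd : (0 + 1 * (m - E) + E.-1)%N = i by lia.
  rewrite -hd; apply: dhomogM; last exact: homogSS.
  apply: dhomogM; first exact: homogSgn.
  by apply: dhomogMn; apply: homogL.
have hA : I (L ^+ m - l * r).
  have hs : s ^+ 2 = 1 by apply: sqrr_sign.
  have hl := lSS E; rewrite [(- L) ^+ _]exprNn -/s in hl.
  have hL : L ^+ m = L ^+ (m - E) * L ^+ E by rewrite -exprD subnK.
  have -> : L ^+ m - l * r = (s * L ^+ (m - E)) * 'X_w ^+ E.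
    rewrite /r mulrN opprK.
    have -> : l * (s * L ^+ (m - E) * SS E) = s * L ^+ (m - E) * (l * SS E) by ring.
    rewrite hl hL; apply/eqP; rewrite -subr_eq0; apply/eqP.
    transitivity (L ^+ (m - E) * L ^+ E * (1 - s ^+ 2)); first by ring.
    by rewrite hs subrr mulr0.
  by apply: IM; apply: IX.
have hB : I (u - c *: 'X_[ss e w]).
  by apply: (xfree_top he hux); rewrite -/m heq.
have hC : I (L ^+ m - M *: 'X_[ss e w]).
  apply: (xfree_top he); first by apply: xfreeXn; apply: xfreeL.
  by rewrite -[X in X.-homog]mul1n; apply: dhomogMn; apply: homogL.
exists (q + (c / M) *: r); split.
  by apply: rpredD => //; apply: rpredZ.
set cM := c / M.
have hc : c = cM * M by rewrite /cM divfK.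
have -> : l * q + u - l * (q + cM *: r) =
   (u - c *: 'X_[ss e w]) - cM *: (L ^+ m - M *: 'X_[ss e w]) + cM *: (L ^+ m - l * r).
  rewrite hc -scalerA; rewrite -!mul_mpolyC; ring.
by apply: ID; [apply: IB => //; apply: IZ | apply: IZ].
Qed.

Theorem wlp_pos :
  (e w <= mdeg (ss e w))%N -> (mdeg (ss e w) <= (e w).+1)%N ->
  (L ^+ mdeg (ss e w))@_(ss e w) != 0 ->
  (exists rho, [/\ (rho <= ss e w)%MM, mdeg rho = e w & (L ^+ e w)@_rho != 0]) ->
  mci_WLP k e.
Proof.
move=> hEm hmE hM hrho; exists l; split.
  by apply: rpredD; [apply: homogL | apply: homogX1].
move=> i; case: (ltnP i (e w)) => hi.
  by left; apply: inj_pos.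
by right; apply: surj_pos => //; apply: (leq_trans hmE).
Qed.

End Pos.

Section Multi.
Variables (k : fieldType) (n : nat).
Implicit Types (f g h p q u : {mpoly k[n]}) (mu nu : 'X_{1..n}).
Variables (w : 'I_n) (a : 'I_n -> k).
Local Notation L := (LL w a).

Definition PF mu := (\prod_(j < n) (mu j)`!)%N.
Definition PA mu := \prod_(j < n) a j ^+ mu j.

Lemma PF_gt0 mu : (0 < PF mu)%N.
Proof. by apply: prodn_gt0 => j; apply: fact_gt0. Qed.

Lemma sub1E mu (j i : 'I_n) : (mu - U_(j))%MM i = (if i == j then (mu i).-1 else mu i)%N.
Proof.
rewrite mnmBE mnm1E eq_sym; case: eqP => _; by rewrite ?subn1 ?subn0.
Qed.

Lemma PF_sub mu (j : 'I_n) : (0 < mu j)%N -> PF mu = (PF (mu - U_(j))%MM * mu j)%N.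
Proof.
move=> hj; rewrite /PF (bigD1 j) // [X in (_ = X * _)%N](bigD1 j) //= sub1E eqxx.
rewrite -{1}(prednK hj) factS (prednK hj).
rewrite [X in (_ = _ * X * _)%N](eq_bigr (fun i => (mu i)`!)); last first.
  by move=> i /negbTE hi; rewrite sub1E hi.
by rewrite [RHS]mulnC !mulnA.
Qed.

Lemma PA_sub mu (j : 'I_n) : (0 < mu j)%N -> PA mu = a j * PA (mu - U_(j))%MM.
Proof.
move=> hj; rewrite /PA (bigD1 j) //= [X in (_ = _ * X)](bigD1 j) //= sub1E eqxx.
rewrite -{1}(prednK hj) exprS -mulrA; congr (_ * (_ * _)).
by apply: eq_bigr => i /negbTE hi; rewrite sub1E hi.
Qed.

Lemma multinomial_coef N mu : mu w = 0%N -> mdeg mu = N ->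
  (PF mu %| N`!)%N /\ (L ^+ N)@_mu = (N`! %/ PF mu)%:R * PA mu.
Proof.
elim: N mu => [|N IH] mu hw hd.
  move/eqP: hd; rewrite mdeg_eq0 => /eqP ->.
  have hP : PF 0%MM = 1%N by rewrite /PF big1 // => j _; rewrite mnm0E.
  have hA : PA 0%MM = 1 by rewrite /PA big1 // => j _; rewrite mnm0E expr0.
  by rewrite hP hA expr0 mcoeff1 eqxx divn1 mulr1.
pose q (j : 'I_n) := (N`! %/ PF (mu - U_(j))%MM)%N.
have IHj : forall j : 'I_n, j != w -> (0 < mu j)%N ->
    (q j * PF mu = N`! * mu j)%N /\ (L ^+ N)@_(mu - U_(j))%MM = (q j)%:R * PA (mu - U_(j))%MM.
  move=> j hjw hj.
  have hw' : (mu - U_(j))%MM w = 0%N by rewrite sub1E eq_sym (negbTE hjw).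
  have hd' : mdeg (mu - U_(j))%MM = N.
    move: hd; rewrite {1}(_ : mu = (mu - U_(j)) + U_(j))%MM ?mdegD ?mdeg1 ?addn1 => [[]//|].
    rewrite submK //; apply/mnm_lepP => i; rewrite mnm1E.
    by case: eqP => [<-|_].
  have [hdv hc] := IH _ hw' hd'; split => //.
  by rewrite (PF_sub hj) mulnA /q divnK.
set S := (\sum_(j < n | j != w) (if (0 < mu j)%N then q j else 0))%N.
have hsum : (\sum_(j < n | j != w) mu j = N.+1)%N.
  by rewrite -hd mdegE [in RHS](bigD1 w) //= hw add0n.
have hSP : (S * PF mu = N.+1`!)%N.
  rewrite /S big_distrl /= factS mulnC -hsum big_distrr /=.
  apply: eq_bigr => j hjw; case: (posnP (mu j)) => hj; first by rewrite hj muln0.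
  by rewrite (IHj j hjw hj).1 mulnC.
have hdv : (PF mu %| N.+1`!)%N by rewrite -hSP dvdn_mull.
have -> : (N.+1`! %/ PF mu = S)%N by rewrite -hSP mulnK ?PF_gt0.
split => //.
rewrite exprS coefLM /S natr_sum mulr_suml.
apply: eq_bigr => j hjw; case: (posnP (mu j)) => hj; first by rewrite mulr0 mul0r.
by rewrite (IHj j hjw hj).2 (PA_sub hj); ring.
Qed.

End Multi.

Section Neg.
Variables (k : fieldType) (n : nat).
Implicit Types (f g h p q u : {mpoly k[n]}) (mu nu : 'X_{1..n}).
Variables (e : 'I_n -> nat) (w : 'I_n).
Hypothesis he : forall j, (0 < e j)%N.
Local Notation I := (@in_mci_ideal k n e).

Lemma lin_form (l : {mpoly k[n]}) : l \is 1.-homog -> l = \sum_j (l@_U_(j)) *: 'X_j.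
Proof.
move=> hl; apply/mpolyP => mu; rewrite raddf_sum /=.
case: (boolP (mdeg mu == 1%N)) => [/mdeg1P [i /eqP ->]|hmu].
  rewrite (bigD1 i) //= mcoeffZ mcoeffX eqxx mulr1 big1 ?addr0 // => j hj.
  by rewrite mcoeffZ mcoeffX eq_mnm1 (negbTE hj) mulr0.
rewrite (dhomog_nemf_coeff hl hmu) big1 // => j _.
rewrite mcoeffZ mcoeffX; case: eqP => [E|]; last by rewrite mulr0.
by move: hmu; rewrite -E mdeg1.
Qed.

Lemma fail_at l i f h : I (l * f) -> f \is i.-homog -> h \is i.+1.-homog ->
  (h * f)@_(tau e) != 0 -> ~ (mult_injective e l i \/ mult_surjective e l i).
Proof.
move=> hlf hf hh hnz [hinj|hsurj].
  by move: hnz; rewrite (ctI he) ?eqxx //; apply: IM; apply: hinj.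
have [f0 [_ hI]] := hsurj h hh.
move: hnz; rewrite (ctI he) ?eqxx //.
have -> : h * f = (h - l * f0) * f + f0 * (l * f) by ring.
by apply: ID; [apply: IMr | apply: IM].
Qed.


Hypothesis hEm : e w = mdeg (ss e w).

Lemma fail_aw (a : 'I_n -> k) (b : k) :
  b != 0 -> (0 < e w)%N -> (LL w a ^+ e w)@_(ss e w) = 0 ->
  ~ (forall i, mult_injective e (LL w a + b *: 'X_w) i \/
               mult_surjective e (LL w a + b *: 'X_w) i).
Proof.
move=> hb hm hM0 hall.
have hEm' := hEm.
case Ew: (e w) hm hM0 hall hEm' => [//|m] _ hM0 hall hEm'.
set L := LL w a.
set X' := b *: ('X_w : {mpoly k[n]}).
set f := \sum_(i < m.+1) X' ^+ (m - i) * (- L) ^+ i.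
have hlf : (L + X') * f = X' ^+ m.+1 - (- L) ^+ m.+1 by rewrite subrXX opprK addrC.
apply: (@fail_at (L + X') m f 'X_[ss e w] _ _ _ _ (hall m)).
- rewrite hlf; apply: IB.
    by rewrite /X' exprZn; apply: IZ; rewrite -Ew; apply: IX.
  rewrite exprNn; apply: IM.
  have := xfree_top he (u := L ^+ m.+1) (w := w) _ _.
  rewrite hM0 scale0r subr0; apply.
    by apply: xfreeXn; apply: xfreeL.
  rewrite -hEm' -[X in X.-homog]mul1n; apply: dhomogMn; exact: homogL.
- apply: rpred_sum => i _.
  have hd : (1 * (m - i) + 1 * i)%N = m.
    by rewrite !mul1n subnK // -ltnS.
  have H1 : X' ^+ (m - i) \is (1 * (m - i)).-homog.
    by apply: dhomogMn; apply: rpredZ; exact: homogX1.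
  have H2 : (- L) ^+ i \is (1 * i).-homog.
    by apply: dhomogMn; rewrite rpredN; exact: homogL.
  by have := dhomogM H1 H2; rewrite hd.
- by rewrite dhomogX hEm'.
rewrite mcoeffMX_gen ss_le_tau tau_sub_ss Ew /=.
rewrite /f big_ord_recl /= subn0 expr0 mulr1 mcoeffD.
have -> : \sum_(i < m) X' ^+ (m - bump 0 i) * (- L) ^+ bump 0 i =
   - (L * \sum_(i < m) X' ^+ (m - bump 0 i) * (- L) ^+ i).
  rewrite mulr_sumr -[RHS]sumrN; apply: eq_bigr => i _.
  by rewrite /bump /= add1n exprS; ring.
rewrite mcoeffN coefLM0; last first.
  by move=> j hj; rewrite mulmnE mnm1E eq_sym (negbTE hj) mul0n.
rewrite oppr0 addr0 /X' exprZn mcoeffZ mpolyXn mcoeffX eqxx mulr1.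
by apply: expf_neq0.
Qed.

Lemma ss_pos (i : 'I_n) : i != w -> (1 < e i)%N -> (0 < ss e w i)%N.
Proof. by move=> hi hei; rewrite ssE (negbTE hi) -ltnS prednK. Qed.

Lemma U_le_ss (i : 'I_n) : (0 < ss e w i)%N -> (U_(i) <= ss e w)%MM.
Proof.
move=> h; apply/mnm_lepP => j; rewrite mnm1E.
by case: eqP => [<-|_].
Qed.

Lemma mdeg_ss_sub (i : 'I_n) : (0 < ss e w i)%N -> mdeg (ss e w - U_(i))%MM = (e w).-1.
Proof.
move=> h; rewrite hEm; have := U_le_ss h => /submK E.
by rewrite -{2}E mdegD mdeg1 addn1.
Qed.

Lemma mono_step (j i : 'I_n) : j != w -> i != w -> (0 < ss e w i)%N ->
  I ('X_j * 'X_[ss e w - U_(i)] - (j == i)%:R *: 'X_[ss e w]).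
Proof.
move=> hj hi hsi; rewrite -mpolyXD.
case: (eqVneq j i) => [->|hji].
  by rewrite addmC submK ?U_le_ss // scale1r subrr; apply: I0.
rewrite scale0r subr0; apply: (@Imono _ _ _ _ j).
rewrite mnmDE mnm1E eqxx sub1E (negbTE hji) ssE (negbTE hj).
by rewrite add1n prednK.
Qed.

Lemma sum_delta (a : 'I_n -> k) (c : k) (i : 'I_n) : i != w ->
  \sum_(j | j != w) a j * (c * (j == i)%:R) = c * a i.
Proof.
move=> hi; rewrite (bigD1 i) // eqxx mulr1 big1 => [|j /andP [_ hj]].
  by rewrite /= addr0 mulrC.
by rewrite (negbTE hj) !mulr0.
Qed.

Lemma lin_aux (x y s : {mpoly k[n]}) (a c1 c2 d1 d2 : k) :
  a *: (c1 *: x + c2 *: y) =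
  a *: (c1 *: (x - d1 *: s) + c2 *: (y - d2 *: s)) + (a * (c1 * d1 + c2 * d2)) *: s.
Proof.
rewrite !scalerBr !scalerDr !scalerN !scalerA mulrDr !mulrA scalerDl.
by rewrite addrACA !subrK.
Qed.

Lemma fail_two (a : 'I_n -> k) (i1 i2 : 'I_n) (c1 c2 : k) :
  i1 != i2 -> i1 != w -> i2 != w -> (1 < e i1)%N -> (1 < e i2)%N ->
  c1 != 0 -> c1 * a i1 + c2 * a i2 = 0 ->
  ~ (forall i, mult_injective e (LL w a) i \/ mult_surjective e (LL w a) i).
Proof.
move=> h12 h1w h2w he1 he2 hc1 hca hall.
have hs1 := ss_pos h1w he1; have hs2 := ss_pos h2w he2.
pose S := 'X_[ss e w] : {mpoly k[n]}.
pose f := c1 *: 'X_[ss e w - U_(i1)] + c2 *: 'X_[ss e w - U_(i2)] : {mpoly k[n]}.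
pose nu := (U_(i1) + U_(w) *+ (e w).-1)%MM.
apply: (@fail_at (LL w a) (e w).-1 f 'X_[nu] _ _ _ _ (hall (e w).-1)).
- pose d (j : 'I_n) := c1 * (j == i1)%:R + c2 * (j == i2)%:R.
  pose T (j : 'I_n) := c1 *: ('X_j * 'X_[ss e w - U_(i1)] - (j == i1)%:R *: S)
     + c2 *: ('X_j * 'X_[ss e w - U_(i2)] - (j == i2)%:R *: S).
  have hsum : \sum_(j | j != w) a j * d j = c1 * a i1 + c2 * a i2.
    rewrite (eq_bigr (fun j => a j * (c1 * (j == i1)%:R) + a j * (c2 * (j == i2)%:R))).
      by rewrite big_split /= !sum_delta.
    by move=> j _; rewrite mulrDr.
  have -> : LL w a * f = \sum_(j | j != w) a j *: T j + (\sum_(j | j != w) a j * d j) *: S.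
    rewrite /LL mulr_suml scaler_suml -big_split /=; apply: eq_bigr => j _.
    rewrite /T /d /f -scalerAl mulrDr -!scalerAr.
    by apply: lin_aux.
  rewrite hsum hca scale0r addr0; apply: Isum => j hj; apply: IZ; apply: ID; apply: IZ;
    exact: mono_step.
- by apply: rpredD; apply: rpredZ; rewrite dhomogX; apply/eqP; apply: mdeg_ss_sub.
- rewrite dhomogX; apply/eqP; have E : mdeg nu = (e w).-1.+1 by rewrite /nu mdegD mdegMn !mdeg1 mul1n add1n.
  exact: E.
rewrite mcoeffMX_gen (tau_split e w).
have hle : (nu <= ss e w + U_(w) *+ (e w).-1)%MM.
  by apply/mnm_lepP => j; rewrite !mnmDE leq_add2r; move/mnm_lepP: (U_le_ss hs1); apply.
have hsub : ((ss e w + U_(w) *+ (e w).-1) - nu)%MM = (ss e w - U_(i1))%MM.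
  by apply/mnmP => j; rewrite !mnmBE !mnmDE subnDr.
rewrite hle hsub /f mcoeffD !mcoeffZ !mcoeffX eqxx mulr1.
have -> : (ss e w - U_(i2) == ss e w - U_(i1))%MM = false.
  apply/negbTE/negP => /eqP /mnmP /(_ i1); rewrite !sub1E eqxx (negbTE h12).
  by case: (ss e w i1) hs1 => // x _ /= /esym /n_Sn.
by rewrite mulr0 addr0.
Qed.

End Neg.

Lemma wlp_trivial (k : fieldType) n (e : 'I_n -> nat) (j : 'I_n) :
  e j = 0%N -> mci_WLP k e.
Proof.
move=> hj; exists 0; split; first exact: rpred0.
move=> i; left => f _ _.
exists (fun i0 => if i0 == j then f else 0).
rewrite (bigD1 j) //= eqxx hj expr0 mulr1 big1 ?addr0 // => i0 /negbTE ->.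
by rewrite mul0r.
Qed.

Lemma two_idx (n' : nat) (d : nat -> nat) p : prime p ->
  (p %| (\sum_(i < n') (d i).-1)`! %/ \prod_(i < n') ((d i).-1)`!)%N ->
  exists i1 i2 : 'I_n', [/\ i1 != i2, (1 < d i1)%N & (1 < d i2)%N].
Proof.
move=> hp hdv.
case: (boolP [exists i1 : 'I_n', exists i2 : 'I_n', [&& i1 != i2, (1 < d i1)%N & (1 < d i2)%N]]).
  by move=> /existsP [i1 /existsP [i2 /and3P [h1 h2 h3]]]; exists i1, i2.
rewrite negb_exists => /forallP H.
suff : ((\sum_(i < n') (d i).-1)`! %/ \prod_(i < n') ((d i).-1)`! = 1)%N.
  by move=> E; move: hdv; rewrite E dvdn1 => /eqP hp1; move: hp; rewrite hp1.
case: (boolP [exists i0 : 'I_n', (1 < d i0)%N]).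
  move=> /existsP [i0 hi0].
  have other : forall i : 'I_n', i != i0 -> (d i).-1 = 0%N.
    move=> i hi; move: (H i0); rewrite negb_exists => /forallP /(_ i).
    rewrite eq_sym hi hi0 /= => hn; move: hn; case: (d i) => [|[|x]] //.
  rewrite (bigD1 i0) //= big1 ?addn0; last by move=> i /other.
  rewrite (bigD1 i0) //= big1 ?muln1; last by move=> i /other ->.
  by rewrite divnn fact_gt0.
rewrite negb_exists => /forallP H0.
have z : forall i : 'I_n', (d i).-1 = 0%N.
  by move=> i; move: (H0 i); case: (d i) => [|[|x]].
by rewrite big1 ?big1 //= => i _; rewrite z.
Qed.

Unset Implicit Arguments.

Theorem proposition4p10 (k : fieldType) (p : nat) (n : nat) (d : nat -> nat)
  (hp : p \in [pchar k]) (hn : (0 < n)%N)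
  (hd : forall i : nat, (i < n.-1)%N -> (0 < d i)%N)
  (hdn : d n.-1 = (\sum_(i < n.-1) (d i).-1)%N) :
  let A : 'I_n -> nat := fun j => d j in
  let B : 'I_n -> nat := fun j => if (j == n.-1 :> nat) then (d j).-1 else d j in
  let multinom := ((d n.-1)`! %/ \prod_(i < n.-1) ((d i).-1)`!)%N in
  (~~ (p %| multinom)%N -> mci_WLP k A /\ mci_WLP k B) /\
  ((p %| multinom)%N -> ~ mci_WLP k A).
Proof.
case: n hn hd hdn => [//|n'] _ hd hdn A B multinom.
move: hd hdn => /= hd hdn.
pose w : 'I_n'.+1 := ord_max.
have hAw : A w = d n' by [].
have hBw : B w = (d n').-1 by rewrite /B /= eqxx.
have hAj : forall j : 'I_n'.+1, j != w -> A j = d j /\ (0 < d j)%N.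
  move=> j hj; split => //; apply: hd.
  by have := ltn_ord j; rewrite ltnS leq_eqVlt => /orP [/eqP E|//]; move: hj; rewrite -(inj_eq val_inj) /= E eqxx.
have hBj : forall j : 'I_n'.+1, j != w -> B j = d j.
  move=> j hj; rewrite /B; case: eqP => // E; move: hj.
  by rewrite -(inj_eq val_inj) /= E eqxx.
have hss : ss B w = ss A w.
  by apply/mnmP => j; rewrite !ssE; case: eqP => // /eqP hj; rewrite hBj.
have hmd : mdeg (ss A w) = d n'.
  rewrite mdegE big_ord_recr /= ssE eqxx addn0 hdn; apply: eq_bigr => i _.
  have hi : widen_ord (leqnSn n') i != w.
    by rewrite -(inj_eq val_inj) /= neq_ltn ltn_ord.
  by rewrite ssE (negbTE hi).
have hPF : PF (ss A w) = (\prod_(i < n') ((d i).-1)`!)%N.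
  rewrite /PF big_ord_recr /= ssE eqxx muln1; apply: eq_bigr => i _.
  have hi : widen_ord (leqnSn n') i != w.
    by rewrite -(inj_eq val_inj) /= neq_ltn ltn_ord.
  by rewrite ssE (negbTE hi).
have hcoef : forall a : 'I_n'.+1 -> k,
    (LL w a ^+ d n')@_(ss A w) = multinom%:R * PA a (ss A w).
  move=> a; have h0 : ss A w w = 0%N by rewrite ssE eqxx.
  have [_ ->] := multinomial_coef a h0 hmd.
  by rewrite /multinom hPF.
have PA1 : forall mu, PA (fun _ : 'I_n'.+1 => (1 : k)) mu = 1.
  by move=> mu; rewrite /PA big1 // => j _; rewrite expr1n.
have hwj : forall i : 'I_n', widen_ord (leqnSn n') i != w.
  by move=> i; rewrite -(inj_eq val_inj) /= neq_ltn ltn_ord.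
split.
  move=> hnd; have hM : (multinom%:R : k) != 0 by rewrite -(dvdn_pcharf hp).
  pose a1 := fun _ : 'I_n'.+1 => (1 : k).
  have hL : (LL w a1 ^+ d n')@_(ss A w) != 0 by rewrite hcoef PA1 mulr1.
  split.
    case: (posnP (d n')) => hdn0; first by apply: (@wlp_trivial k _ A w); rewrite hAw hdn0.
    have heA : forall j, (0 < A j)%N.
      by move=> j; case: (eqVneq j w) => [->|hj]; [rewrite hAw | case: (hAj j hj) => ->].
    apply: (@wlp_pos k n'.+1 A w a1 heA).
    - by rewrite hAw hmd.
    - by rewrite hAw hmd.
    - by rewrite hmd.
    - by exists (ss A w); split; [exact: lepm_refl | rewrite hmd | exact: hL].
  case: (posnP (d n').-1) => hdn0; first by apply: (@wlp_trivial k _ B w); rewrite hBw hdn0.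
  have hpos : (0 < d n')%N by move: hdn0; case: (d n').
  have heB : forall j, (0 < B j)%N.
    move=> j; case: (eqVneq j w) => [->|hj]; first by rewrite hBw.
    by rewrite hBj //; case: (hAj j hj).
  apply: (@wlp_pos k n'.+1 B w a1 heB).
  - by rewrite hBw hss hmd leq_pred.
  - by rewrite hBw hss hmd prednK.
  - by rewrite hss hmd.
  rewrite hss hBw.
  move: hL; rewrite -(prednK hpos) exprS coefLM => hL.
  case: (boolP [exists j, [&& j != w, (0 < ss A w j)%N &
        (LL w a1 ^+ (d n').-1)@_(ss A w - U_(j))%MM != 0]]).
    move=> /existsP [j /and3P [hjw hj hnz]].
    have hle : (U_(j) <= ss A w)%MM.
      by apply/mnm_lepP => i; rewrite mnm1E; case: eqP => [<-|].
    exists (ss A w - U_(j))%MM; split => //.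
      by apply/mnm_lepP => i; rewrite mnmBE leq_subr.
    by move: hmd; rewrite -{1}(submK hle) mdegD mdeg1 addn1 => <-.
  rewrite negb_exists => /forallP H; move: hL; rewrite big1 ?eqxx // => j hj.
  case: ifP => hj0; last by rewrite mulr0.
  by move: (H j); rewrite hj hj0 /= negbK => /eqP ->; rewrite mulr0.
move=> hdv.
have hdv' := hdv; rewrite /multinom hdn in hdv'.
have [i1 [i2 [h12 h1 h2]]] := two_idx (pcharf_prime hp) hdv'.
pose j1 := widen_ord (leqnSn n') i1; pose j2 := widen_ord (leqnSn n') i2.
have hj12 : j1 != j2 by rewrite -(inj_eq val_inj) /= (inj_eq val_inj).
have hdpos : (0 < d n')%N.
  rewrite hdn (bigD1 i1) //=; move: h1; case: (d i1) => [|[|x]] //.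
have heA : forall j, (0 < A j)%N.
  by move=> j; case: (eqVneq j w) => [->|hj]; [rewrite hAw | case: (hAj j hj) => ->].
have hEm : A w = mdeg (ss A w) by rewrite hmd.
move=> [l [hl hall]].
pose a := fun j : 'I_n'.+1 => l@_U_(j).
have hlf : l = LL w a + a w *: 'X_w.
  by rewrite {1}(lin_form hl) (bigD1 w) //= addrC.
rewrite hlf in hall.
have hM0 : (LL w a ^+ A w)@_(ss A w) = 0.
  by rewrite hAw hcoef; move: hdv; rewrite (dvdn_pcharf hp) => /eqP ->; rewrite mul0r.
case: (eqVneq (a w) 0) => haw; last first.
  exact: (fail_aw heA hEm haw (heA w) hM0 hall).
rewrite haw scale0r addr0 in hall.
have hA1 : (1 < A j1)%N by [].
have hA2 : (1 < A j2)%N by [].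
case: (eqVneq (a j2) 0) => ha2.
  apply: (@fail_two k _ A w heA hEm a j2 j1 1 0) => //; try exact: hwj.
  - by rewrite eq_sym.
  - by rewrite oner_eq0.
  - by rewrite ha2 mulr0 mul0r addr0.
apply: (@fail_two k _ A w heA hEm a j1 j2 (a j2) (- a j1)) => //; try exact: hwj.
by rewrite mulNr mulrC subrr.
Qed.
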